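(* Let $\psi_n(x)=e^{-n^{1/2}x^2/2}\big(\cosh(xn^{-1/4})\big)^n$ and $I_\infty=\int_{\mathbb{R}}e^{-x^4/12}dx$. For every $b\ge0$ and every $\eta>0$ there is $n_0$ such that for all $n\ge n_0$ and all $\xi\in\mathbb{R}$, $$|\widehat{\psi_n}(\xi)|\le(1+\eta)\,K(b)\,e^{-b|\xi|},\qquad K(b)=2e^{13b^4/12}\big(2\sqrt3\,b+I_\infty\big),$$ where $\widehat{\psi_n}(\xi)=\int_{\mathbb{R}}\psi_n(x)e^{i\xi x}dx$. *)

(* Defs.v *)
From Stdlib Require Import Reals.
Open Scope R_scope.

Definition improper_integral_R (f : R -> R) (l : R) : Prop :=
  (forall a b : R, inhabited (Riemann_integrable f a b)) /\
  (forall eps : R, eps > 0 -> exists M : R,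
     forall (a b : R) (pr : Riemann_integrable f a b),
       a <= - M -> M <= b -> Rabs (RiemannInt pr - l) < eps).

Definition psi (n : nat) (x : R) : R :=
  exp (- sqrt (INR n) * x ^ 2 / 2) * (cosh (x * Rpower (INR n) (- / 4))) ^ n.

Definition K (Iinf b : R) : R :=
  2 * exp (13 * b ^ 4 / 12) * (2 * sqrt 3 * b + Iinf).

(* Main.v *)
Require Import Defs.
From Stdlib Require Import Reals.
Open Scope R_scope.
From Coquelicot Require Import Coquelicot.
From Stdlib Require Import Lra Lia Psatz ZArith.
Open Scope R_scope.

Lemma deq (f : R -> R) x l l' : is_derive f x l -> l = l' -> is_derive f x l'.
Proof. intros H ->; exact H. Qed.
Lemma d_plus (f g : R -> R) x df dg : is_derive f x df -> is_derive g x dg ->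
  is_derive (fun t => f t + g t) x (df + dg).
Proof. intros; apply (is_derive_plus f g); auto. Qed.
Lemma d_minus (f g : R -> R) x df dg : is_derive f x df -> is_derive g x dg ->
  is_derive (fun t => f t - g t) x (df - dg).
Proof. intros; apply (is_derive_minus f g); auto. Qed.
Lemma d_opp (f : R -> R) x df : is_derive f x df ->
  is_derive (fun t => - f t) x (- df).
Proof. intros; apply (is_derive_opp f); auto. Qed.
Lemma d_mult (f g : R -> R) x df dg : is_derive f x df -> is_derive g x dg ->
  is_derive (fun t => f t * g t) x (df * g x + f x * dg).
Proof. intros; apply (is_derive_mult f g); auto. intros; apply Rmult_comm. Qed.
Lemma d_const (c x : R) : is_derive (fun _ => c) x 0.
Proof. apply (is_derive_const c x). Qed.
Lemma d_id (x : R) : is_derive (fun t => t) x 1.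
Proof. apply (is_derive_id x). Qed.
Lemma d_exp (f : R -> R) x df : is_derive f x df ->
  is_derive (fun t => exp (f t)) x (df * exp (f x)).
Proof. intros H. apply (is_derive_comp exp f); auto. apply is_derive_exp. Qed.
Lemma d_cos (f : R -> R) x df : is_derive f x df ->
  is_derive (fun t => cos (f t)) x (df * - sin (f x)).
Proof. intros H. apply (is_derive_comp cos f); auto. apply is_derive_cos. Qed.
Lemma d_sin (f : R -> R) x df : is_derive f x df ->
  is_derive (fun t => sin (f t)) x (df * cos (f x)).
Proof. intros H. apply (is_derive_comp sin f); auto. apply is_derive_sin. Qed.

Definition cadd (a b : R * R) : R * R := (fst a + fst b, snd a + snd b).
Definition cmul (a b : R * R) : R * R :=
  (fst a * fst b - snd a * snd b, fst a * snd b + snd a * fst b).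
Definition cexp (a : R * R) : R * R :=
  (exp (fst a) * cos (snd a), exp (fst a) * sin (snd a)).
Fixpoint cpow (a : R * R) (n : nat) : R * R :=
  match n with O => (1, 0) | S m => cmul a (cpow a m) end.
Definition cmod (a : R * R) : R := sqrt (fst a ^ 2 + snd a ^ 2).

Definition C2 (f : R -> R -> R) := forall x s, continuity_2d_pt f x s.

Definition Hol (F : R -> R -> R * R) : Prop :=
  exists F' : R -> R -> R * R,
  (forall x s, is_derive (fun y => fst (F y s)) x (fst (F' x s))) /\
  (forall x s, is_derive (fun y => snd (F y s)) x (snd (F' x s))) /\
  (forall x s, is_derive (fun t => fst (F x t)) s (- snd (F' x s))) /\
  (forall x s, is_derive (fun t => snd (F x t)) s (fst (F' x s))) /\
  C2 (fun x s => fst (F x s)) /\ C2 (fun x s => snd (F x s)) /\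
  C2 (fun x s => fst (F' x s)) /\ C2 (fun x s => snd (F' x s)).

Lemma C2_const c : C2 (fun _ _ => c).
Proof. intros x s; apply continuity_2d_pt_const. Qed.
Lemma C2_plus f g : C2 f -> C2 g -> C2 (fun x s => f x s + g x s).
Proof. intros Hf Hg x s; apply continuity_2d_pt_plus; auto. Qed.
Lemma C2_minus f g : C2 f -> C2 g -> C2 (fun x s => f x s - g x s).
Proof. intros Hf Hg x s; apply continuity_2d_pt_minus; auto. Qed.
Lemma C2_mult f g : C2 f -> C2 g -> C2 (fun x s => f x s * g x s).
Proof. intros Hf Hg x s; apply continuity_2d_pt_mult; auto. Qed.
Lemma C2_opp f : C2 f -> C2 (fun x s => - f x s).
Proof. intros Hf x s; apply continuity_2d_pt_opp; auto. Qed.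
Lemma C2_exp f : C2 f -> C2 (fun x s => exp (f x s)).
Proof. intros Hf x s; apply continuity_1d_2d_pt_comp; auto.
  apply derivable_continuous_pt, derivable_pt_exp. Qed.
Lemma C2_cos f : C2 f -> C2 (fun x s => cos (f x s)).
Proof. intros Hf x s; apply continuity_1d_2d_pt_comp; auto. apply continuity_cos. Qed.
Lemma C2_sin f : C2 f -> C2 (fun x s => sin (f x s)).
Proof. intros Hf x s; apply continuity_1d_2d_pt_comp; auto. apply continuity_sin. Qed.

Lemma Hol_const c : Hol (fun _ _ => c).
Proof.
  exists (fun _ _ => (0,0)); simpl.
  split; [|split; [|split; [|split; [|split; [|split; [|split]]]]]]; intros;
  try apply C2_const; try apply d_const;
  eapply deq; try apply d_const; simpl; ring.
Qed.

Lemma Hol_id : Hol (fun x s => (x, s)).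
Proof.
  exists (fun _ _ => (1,0)); simpl.
  split; [|split; [|split; [|split; [|split; [|split; [|split]]]]]]; intros.
  - apply d_id.
  - apply d_const.
  - eapply deq. apply d_const. idtac. simpl. ring.
  - apply d_id.
  - intros x s; apply continuity_2d_pt_id1.
  - intros x s; apply continuity_2d_pt_id2.
  - apply C2_const.
  - apply C2_const.
Qed.

Ltac dstep := match goal with
  | |- is_derive (fun _ => _ + _) _ _ => apply d_plus
  | |- is_derive (fun _ => _ - _) _ _ => apply d_minus
  | |- is_derive (fun _ => _ * _) _ _ => apply d_mult
  | |- is_derive (fun _ => - _) _ _ => apply d_opp
  | |- is_derive (fun _ => _ ^ _) _ _ => apply is_derive_pow
  | |- is_derive (fun _ => exp _) _ _ => apply d_exp
  | |- is_derive (fun _ => cos _) _ _ => apply d_cos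
  | |- is_derive (fun _ => sin _) _ _ => apply d_sin
  | |- is_derive (fun t => t) _ _ => apply d_id
  | |- is_derive (Rmult ?a) _ _ => change (Rmult a) with (fun t => a * t)
  | |- is_derive (Rplus ?a) _ _ => change (Rplus a) with (fun t => a + t)
  | |- is_derive Ropp _ _ => change Ropp with (fun t => - t)
  | |- is_derive exp _ _ => change exp with (fun t => exp t)
  | |- is_derive cos _ _ => change cos with (fun t => cos t)
  | |- is_derive sin _ _ => change sin with (fun t => sin t)
  | |- is_derive (fun y => fst (?F y ?s)) _ _ =>
      match goal with H : forall _ _, is_derive (fun y => fst (F y _)) _ _ |- _ => apply H end
  | |- is_derive (fun y => snd (?F y ?s)) _ _ =>
      match goal with H : forall _ _, is_derive (fun y => snd (F y _)) _ _ |- _ => apply H end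
  | |- is_derive (fun y => fst (?F ?s y)) _ _ =>
      match goal with H : forall _ _, is_derive (fun y => fst (F _ y)) _ _ |- _ => apply H end
  | |- is_derive (fun y => snd (?F ?s y)) _ _ =>
      match goal with H : forall _ _, is_derive (fun y => snd (F _ y)) _ _ |- _ => apply H end
  | |- is_derive (fun _ => _) _ _ => apply d_const
  end.
Ltac dsolve := repeat dstep.
Ltac c2step := match goal with
  | |- C2 (fun _ _ => _ + _) => apply C2_plus
  | |- C2 (fun _ _ => _ - _) => apply C2_minus
  | |- C2 (fun _ _ => _ * _) => apply C2_mult
  | |- C2 (fun _ _ => - _) => apply C2_opp
  | |- C2 (fun _ _ => exp _) => apply C2_exp
  | |- C2 (fun _ _ => cos _) => apply C2_cos
  | |- C2 (fun _ _ => sin _) => apply C2_sin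
  | H : C2 ?f |- C2 ?f => exact H
  | |- C2 (fun x _ => x) => intros ? ?; apply continuity_2d_pt_id1
  | |- C2 (fun _ s => s) => intros ? ?; apply continuity_2d_pt_id2
  | |- C2 (fun _ _ => _) => apply C2_const
  end.
Ltac c2solve := repeat c2step.
Ltac hsolve := eapply deq; [dsolve | simpl; first [ring | field]].

Lemma Hol_add F G : Hol F -> Hol G -> Hol (fun x s => cadd (F x s) (G x s)).
Proof.
  intros [F' [H1 [H2 [H3 [H4 [H5 [H6 [H7 H8]]]]]]]] [G' [K1 [K2 [K3 [K4 [K5 [K6 [K7 K8]]]]]]]].
  exists (fun x s => cadd (F' x s) (G' x s)); unfold cadd; simpl.
  split; [|split; [|split; [|split; [|split; [|split; [|split]]]]]]; intros;
  try hsolve; c2solve.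
Qed.

Lemma Hol_mul F G : Hol F -> Hol G -> Hol (fun x s => cmul (F x s) (G x s)).
Proof.
  intros [F' [H1 [H2 [H3 [H4 [H5 [H6 [H7 H8]]]]]]]] [G' [K1 [K2 [K3 [K4 [K5 [K6 [K7 K8]]]]]]]].
  exists (fun x s => cadd (cmul (F' x s) (G x s)) (cmul (F x s) (G' x s))); unfold cadd, cmul; simpl.
  split; [|split; [|split; [|split; [|split; [|split; [|split]]]]]]; intros;
  try hsolve; c2solve.
Qed.

Lemma Hol_exp F : Hol F -> Hol (fun x s => cexp (F x s)).
Proof.
  intros [F' [H1 [H2 [H3 [H4 [H5 [H6 [H7 H8]]]]]]]].
  exists (fun x s => cmul (cexp (F x s)) (F' x s)); unfold cexp, cmul; simpl.
  split; [|split; [|split; [|split; [|split; [|split; [|split]]]]]]; intros;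
  try hsolve; c2solve.
Qed.

Lemma Hol_pow F n : Hol F -> Hol (fun x s => cpow (F x s) n).
Proof.
  intros HF; induction n; simpl.
  - apply (Hol_const (1,0)).
  - apply (Hol_mul F (fun x s => cpow (F x s) n)); auto.
Qed.

Ltac holsplit := split; [|split; [|split; [|split; [|split; [|split; [|split]]]]]];
  [intros; hsolve | intros; hsolve | intros; hsolve | intros; hsolve
  | c2solve | c2solve | c2solve | c2solve].

Lemma c2_swap f x y : continuity_2d_pt f x y -> continuity_2d_pt (fun u v => f v u) y x.
Proof.
  intros H eps. destruct (H eps) as [d Hd]. exists d. intros u v Hu Hv. apply Hd; auto.
Qed.

Lemma c2_c1 f x y : continuity_2d_pt f x y -> continuity_pt (fun u => f u y) x.
Proof.
  intros H eps Heps. destruct (H (mkposreal eps Heps)) as [d Hd].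
  exists d. split; [apply cond_pos|]. intros u [_ Hu]. simpl. unfold R_dist in *.
  apply (Hd u y); auto. unfold Rminus; rewrite Rplus_opp_r, Rabs_R0; apply cond_pos.
Qed.

Lemma c2_cont f x y : continuity_2d_pt f x y -> continuous (fun u => f u y) x.
Proof. intros H; apply continuity_pt_filterlim, c2_c1; auto. Qed.

Lemma deriv_cpt (f : R -> R) df : (forall x, is_derive f x (df x)) -> forall x, continuity_pt f x.
Proof. intros H x. apply derivable_continuous_pt. exists (df x). apply is_derive_Reals, H. Qed.
Lemma deriv_cont (f : R -> R) df : (forall x, is_derive f x (df x)) -> forall x, continuous f x.
Proof. intros H x; apply continuity_pt_filterlim. apply (deriv_cpt f df H). Qed.

Lemma Gderiv_fst F : Hol F -> forall a c s,
  is_derive (fun s => RInt (fun x => fst (F x s)) a c) s (-(snd (F c s) - snd (F a s))).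
Proof.
  intros HF a c s. destruct HF as [F' [H1 [H2 [H3 [H4 [H5 [H6 [H7 H8]]]]]]]].
  eapply deq.
  - apply (is_derive_RInt_param (fun u t => fst (F t u)) a c s).
    + apply filter_forall. intros y t _. exists (- snd (F' t y)). apply H3.
    + intros t _. eapply continuity_2d_pt_ext.
      2: { apply c2_swap. apply C2_opp. exact H8. }
      intros u v. simpl. symmetry. apply is_derive_unique. apply H3.
    + apply filter_forall. intros y. apply (ex_RInt_continuous (V:=R_CompleteNormedModule)). intros z _.
      apply (deriv_cont (fun x => fst (F x y)) (fun x => fst (F' x y))). intros; apply H1.
  - rewrite (RInt_ext _ (fun x => - snd (F' x s))).
    2: { intros x _. apply is_derive_unique. apply H3. }
    apply is_RInt_unique.
    apply (is_RInt_opp (V:=R_NormedModule) (fun x => snd (F' x s))).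
    apply (is_RInt_derive (V:=R_CompleteNormedModule) (fun x => snd (F x s)) (fun x => snd (F' x s))).
    + intros; apply H2.
    + intros; apply continuity_pt_filterlim; apply (c2_c1 (fun x s => snd (F' x s))), H8.
Qed.

Lemma Gderiv_snd F : Hol F -> forall a c s,
  is_derive (fun s => RInt (fun x => snd (F x s)) a c) s (fst (F c s) - fst (F a s)).
Proof.
  intros HF a c s. destruct HF as [F' [H1 [H2 [H3 [H4 [H5 [H6 [H7 H8]]]]]]]].
  eapply deq.
  - apply (is_derive_RInt_param (fun u t => snd (F t u)) a c s).
    + apply filter_forall. intros y t _. exists (fst (F' t y)). apply H4.
    + intros t _. eapply continuity_2d_pt_ext.
      2: { apply c2_swap. apply H7. }
      intros u v. simpl. symmetry. apply is_derive_unique. apply H4.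
    + apply filter_forall. intros y. apply (ex_RInt_continuous (V:=R_CompleteNormedModule)). intros z _.
      apply (deriv_cont (fun x => snd (F x y)) (fun x => snd (F' x y))). intros; apply H2.
  - rewrite (RInt_ext _ (fun x => fst (F' x s))).
    2: { intros x _. apply is_derive_unique. apply H4. }
    apply is_RInt_unique.
    apply (is_RInt_derive (V:=R_CompleteNormedModule) (fun x => fst (F x s)) (fun x => fst (F' x s))).
    + intros; apply H1.
    + intros; apply continuity_pt_filterlim; apply (c2_c1 (fun x s => fst (F' x s))), H7.
Qed.

Lemma mvt_all (g dg : R -> R) (t : R) : (forall s, is_derive g s (dg s)) ->
  exists th, Rmin 0 t <= th <= Rmax 0 t /\ g t - g 0 = dg th * t.
Proof.
  intros H. destruct (MVT_gen g 0 t dg) as [th [Hth E]].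
  - intros; apply H.
  - intros x _. apply (deriv_cpt g dg H).
  - exists th. split; auto. rewrite E; ring.
Qed.

Lemma contour F : Hol F -> forall a c t,
  (exists th, Rmin 0 t <= th <= Rmax 0 t /\
    RInt (fun x => fst (F x t)) a c - RInt (fun x => fst (F x 0)) a c
     = (-(snd (F c th) - snd (F a th))) * t) /\
  (exists th, Rmin 0 t <= th <= Rmax 0 t /\
    RInt (fun x => snd (F x t)) a c - RInt (fun x => snd (F x 0)) a c
     = (fst (F c th) - fst (F a th)) * t).
Proof.
  intros HF a c t. split.
  - apply (mvt_all (fun s => RInt (fun x => fst (F x s)) a c)
      (fun s => -(snd (F c s) - snd (F a s)))). intros; apply Gderiv_fst; auto.
  - apply (mvt_all (fun s => RInt (fun x => snd (F x s)) a c)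
      (fun s => (fst (F c s) - fst (F a s)))). intros; apply Gderiv_snd; auto.
Qed.

Definition ccosh (w : R * R) : R * R :=
  cmul (/2, 0) (cadd (cexp w) (cexp (- fst w, - snd w))).

Definition Fp (al r xi : R) (n : nat) (x s : R) : R * R :=
  cmul (cexp (- al * (x^2 - s^2) / 2 - xi * s, - al * x * s + xi * x))
       (cpow (ccosh (r * x, r * s)) n).

Lemma Hol_lin r : Hol (fun x s => (r * x, r * s)).
Proof.
  exists (fun _ _ => (r, 0)); simpl.
  holsplit.
Qed.

Lemma Hol_nlin r : Hol (fun x s => (- fst (r * x, r * s), - snd (r * x, r * s))).
Proof.
  exists (fun _ _ => (-r, 0)); simpl.
  holsplit.
Qed.

Lemma Hol_quad al xi : Hol (fun x s => (- al * (x^2 - s^2) / 2 - xi * s, - al * x * s + xi * x)).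
Proof.
  exists (fun x s => (- al * x, - al * s + xi)); simpl.
  unfold Rdiv; holsplit.
Qed.

Lemma Hol_Fp al r xi n : Hol (Fp al r xi n).
Proof.
  unfold Fp.
  apply (Hol_mul (fun x s => cexp (- al * (x^2 - s^2) / 2 - xi * s, - al * x * s + xi * x))
                 (fun x s => cpow (ccosh (r * x, r * s)) n)).
  - apply (Hol_exp (fun x s => (- al * (x^2 - s^2) / 2 - xi * s, - al * x * s + xi * x))).
    apply Hol_quad.
  - apply (Hol_pow (fun x s => ccosh (r * x, r * s))). unfold ccosh.
    apply (Hol_mul (fun _ _ => (/2, 0))). apply Hol_const.
    apply (Hol_add (fun x s => cexp (r * x, r * s))).
    + apply (Hol_exp (fun x s => (r * x, r * s))). apply Hol_lin.
    + apply (Hol_exp (fun x s => (- fst (r * x, r * s), - snd (r * x, r * s)))). apply Hol_nlin.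
Qed.

Lemma cmod_cmul a b : cmod (cmul a b) = cmod a * cmod b.
Proof.
  unfold cmod, cmul; simpl. rewrite <- sqrt_mult by nra. f_equal. ring.
Qed.

Lemma cmod_cexp a : cmod (cexp a) = exp (fst a).
Proof.
  unfold cmod, cexp; cbn [fst snd].
  replace ((exp (fst a) * cos (snd a)) ^ 2 + (exp (fst a) * sin (snd a)) ^ 2)
    with (exp (fst a) ^ 2 * (sin (snd a) ^ 2 + cos (snd a) ^ 2)) by ring.
  pose proof (sin2_cos2 (snd a)) as E. unfold Rsqr in E. replace (sin (snd a) ^ 2 + cos (snd a) ^ 2) with 1 by (simpl; lra).
  rewrite Rmult_1_r.
  apply sqrt_pow2. left; apply exp_pos.
Qed.

Lemma cmod_cpow a n : cmod (cpow a n) = cmod a ^ n.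
Proof.
  induction n; simpl.
  - unfold cmod; simpl. replace (1 * (1 * 1) + 0 * (0 * 1)) with 1 by ring. apply sqrt_1.
  - rewrite cmod_cmul, IHn. ring.
Qed.

Lemma cmod_ge0 a : 0 <= cmod a.
Proof. apply sqrt_pos. Qed.

Lemma cosh_sinh x : cosh x ^ 2 - sinh x ^ 2 = 1.
Proof.
  unfold cosh, sinh. rewrite exp_Ropp. field. apply Rgt_not_eq, exp_pos.
Qed.

Lemma cosh_pos x : 0 < cosh x.
Proof. unfold cosh. pose proof (exp_pos x); pose proof (exp_pos (-x)). lra. Qed.

Lemma cosh_ge1 x : 1 <= cosh x.
Proof. pose proof (cosh_sinh x). pose proof (cosh_pos x). nra. Qed.

Lemma ccosh_eq p q : ccosh (p, q) = (cosh p * cos q, sinh p * sin q).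
Proof.
  unfold ccosh, cmul, cadd, cexp, cosh, sinh; simpl.
  rewrite cos_neg, sin_neg. f_equal; field.
Qed.

Lemma cmod_ccosh p q : cmod (ccosh (p, q)) = sqrt (cosh p ^ 2 - sin q ^ 2).
Proof.
  rewrite ccosh_eq. unfold cmod; simpl. f_equal.
  pose proof (cosh_sinh p). pose proof (sin2_cos2 q). unfold Rsqr in *. nra.
Qed.

Lemma cpow_real c n : cpow (c, 0) n = (c ^ n, 0).
Proof.
  induction n; simpl; auto. rewrite IHn. unfold cmul; simpl. f_equal; ring.
Qed.

Lemma Fp_real al r xi n x :
  Fp al r xi n x 0 = (exp (- al * x ^ 2 / 2) * cosh (r * x) ^ n * cos (xi * x),
                      exp (- al * x ^ 2 / 2) * cosh (r * x) ^ n * sin (xi * x)).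
Proof.
  unfold Fp. replace (r * 0) with 0 by ring. rewrite ccosh_eq, cos_0, sin_0.
  replace (sinh (r * x) * 0) with 0 by ring. rewrite Rmult_1_r, cpow_real.
  unfold cmul, cexp; cbn [fst snd].
  replace (- al * (x ^ 2 - 0 ^ 2) / 2 - xi * 0) with (- al * x ^ 2 / 2) by field.
  replace (- al * x * 0 + xi * x) with (xi * x) by ring.
  f_equal; ring.
Qed.

Lemma cmod_Fp al r xi n x s :
  cmod (Fp al r xi n x s) =
  exp (- al * (x ^ 2 - s ^ 2) / 2 - xi * s) * sqrt (cosh (r * x) ^ 2 - sin (r * s) ^ 2) ^ n.
Proof.
  unfold Fp. rewrite cmod_cmul, cmod_cexp, cmod_cpow, cmod_ccosh. reflexivity.
Qed.

Lemma mono (g dg : R -> R) a y : (forall t, is_derive g t (dg t)) ->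
  a <= y -> (forall t, a <= t <= y -> 0 <= dg t) -> g a <= g y.
Proof.
  intros H Hay Hd. destruct (MVT_gen g a y dg) as [th [Hth E]].
  - intros; apply H.
  - intros x _. apply (deriv_cpt g dg H).
  - rewrite Rmin_left in Hth by lra. rewrite Rmax_right in Hth by lra.
    assert (0 <= dg th) by (apply Hd; lra). nra.
Qed.

Lemma d_cosh1 x : is_derive cosh x (sinh x).
Proof. unfold cosh, sinh. auto_derive; auto. field. Qed.
Lemma d_sinh1 x : is_derive sinh x (cosh x).
Proof. unfold cosh, sinh. auto_derive; auto. field. Qed.

Lemma d_ln (f : R -> R) x df : is_derive f x df -> 0 < f x ->
  is_derive (fun t => ln (f t)) x (df / f x).
Proof.
  intros H Hp. eapply deq. apply (is_derive_comp ln f). 2: exact H.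
  apply is_derive_Reals. apply derivable_pt_lim_ln; auto.
  unfold scal; simpl; unfold mult; simpl. field. lra.
Qed.

Lemma sinh_ge0 p : 0 <= p -> 0 <= sinh p.
Proof.
  intros. unfold sinh. assert (exp (-p) <= exp p).
  { destruct (Rle_lt_or_eq_dec (-p) p) as [h|h]; [lra| apply Rlt_le, exp_increasing; auto | rewrite h; lra]. }
  lra.
Qed.

Lemma sinh_odd p : sinh (- p) = - sinh p.
Proof. unfold sinh. rewrite Ropp_involutive. field. Qed.
Lemma cosh_even p : cosh (- p) = cosh p.
Proof. unfold cosh. rewrite Ropp_involutive. field. Qed.
Lemma cosh0 : cosh 0 = 1.
Proof. unfold cosh. rewrite Ropp_0, exp_0. field. Qed.
Lemma sinh0 : sinh 0 = 0.
Proof. unfold sinh. rewrite Ropp_0, exp_0. field. Qed.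

Lemma F1 p : 0 <= p -> sinh p <= p * cosh p.
Proof.
  intros Hp.
  assert (H := mono (fun t => t * cosh t - sinh t) (fun t => t * sinh t) 0 p).
  cbv beta in H. rewrite cosh0, sinh0 in H.
  enough (0 * 1 - 0 <= p * cosh p - sinh p) by lra. apply H; auto.
  - intros t. eapply deq. apply d_minus. apply d_mult. apply d_id. apply d_cosh1. apply d_sinh1. simpl; ring.
  - intros t Ht. apply Rmult_le_pos. lra. apply sinh_ge0; lra.
Qed.

Definition lam := 24/25.
Definition cc := lam ^ 4 / 12.
Definition kap := cc / 1296.

Lemma cc_val : cc = 331776 / 4687500.
Proof. unfold cc, lam. field. Qed.

Lemma F2 p : 0 <= p -> (p - p ^ 3 / 3) * cosh p <= sinh p.
Proof.
  intros Hp.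
  assert (H := mono (fun t => sinh t - (t - t ^ 3 / 3) * cosh t)
     (fun t => t ^ 2 * cosh t - (t - t ^ 3 / 3) * sinh t) 0 p).
  cbv beta in H. rewrite cosh0, sinh0 in H.
  enough (0 - (0 - 0 ^ 3 / 3) * 1 <= sinh p - (p - p ^ 3 / 3) * cosh p) by lra. apply H; auto.
  - intros t. eapply deq. apply d_minus. apply d_sinh1. apply d_mult.
    apply d_minus. apply d_id. apply (d_mult (fun t => t ^ 3) (fun _ => /3)). apply is_derive_pow, d_id. apply d_const.
    apply d_cosh1. simpl; field.
  - intros t Ht. pose proof (F1 t (proj1 Ht)). pose proof (sinh_ge0 t (proj1 Ht)).
    pose proof (cosh_pos t).
    assert (0 <= t * (t * cosh t - sinh t)) by (apply Rmult_le_pos; lra).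
    assert (0 <= t ^ 3 * sinh t) by (apply Rmult_le_pos; [apply pow_le; lra | lra]).
    nra.
Qed.

Lemma F3 p : 0 <= p <= 1/3 -> sinh p <= (p - 4 * cc * p ^ 3) * cosh p.
Proof.
  intros Hp.
  assert (H := mono (fun t => (t - 4 * cc * t ^ 3) * cosh t - sinh t)
     (fun t => - 12 * cc * t ^ 2 * cosh t + (t - 4 * cc * t ^ 3) * sinh t) 0 p).
  cbv beta in H. rewrite cosh0, sinh0 in H.
  enough ((0 - 4 * cc * 0 ^ 3) * 1 - 0 <= (p - 4 * cc * p ^ 3) * cosh p - sinh p) by lra.
  apply H; [|lra|].
  - intros t. eapply deq. apply d_minus. apply d_mult.
    apply d_minus. apply d_id. apply (d_mult (fun _ => 4 * cc) (fun t => t ^ 3)). apply d_const. apply is_derive_pow, d_id.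
    apply d_cosh1. apply d_sinh1. simpl; field.
  - intros t Ht. pose proof (F2 t (proj1 Ht)). pose proof (cosh_pos t).
    rewrite cc_val in *.
    assert (Hb : 0 <= - 12 * (331776 / 4687500) + (1 - 4 * (331776 / 4687500) * t ^ 2) * (1 - t ^ 2 / 3)).
    { assert (t ^ 2 <= 1/9) by nra. nra. }
    assert (Hq : 0 <= t - 4 * (331776 / 4687500) * t ^ 3) by nra.
    assert (- 12 * (331776 / 4687500) * t ^ 2 * cosh t + (t - 4 * (331776 / 4687500) * t ^ 3) * ((t - t ^ 3 / 3) * cosh t)
            = t ^ 2 * cosh t * (- 12 * (331776 / 4687500) + (1 - 4 * (331776 / 4687500) * t ^ 2) * (1 - t ^ 2 / 3))) by field.
    assert (0 <= t ^ 2 * cosh t * (- 12 * (331776 / 4687500) + (1 - 4 * (331776 / 4687500) * t ^ 2) * (1 - t ^ 2 / 3))).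
    { apply Rmult_le_pos; auto. apply Rmult_le_pos; nra. }
    nra.
Qed.

Lemma exp_le x y : x <= y -> exp x <= exp y.
Proof. intros H; destruct (Rle_lt_or_eq_dec x y H) as [h|h]; [apply Rlt_le, exp_increasing; auto| subst; lra]. Qed.
Lemma ln_le' x y : 0 < x -> x <= y -> ln x <= ln y.
Proof. intros H1 H; destruct (Rle_lt_or_eq_dec x y H) as [h|h]; [apply Rlt_le, ln_increasing; auto| subst; lra]. Qed.

Lemma FA0 p : 0 <= p <= 1/3 -> ln (cosh p) <= p ^ 2 / 2 - cc * p ^ 4.
Proof.
  intros Hp.
  assert (H := mono (fun t => t ^ 2 / 2 - cc * t ^ 4 - ln (cosh t))
     (fun t => t - 4 * cc * t ^ 3 - sinh t / cosh t) 0 p).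
  cbv beta in H. rewrite cosh0, ln_1 in H.
  enough (0 ^ 2 / 2 - cc * 0 ^ 4 - 0 <= p ^ 2 / 2 - cc * p ^ 4 - ln (cosh p)) by lra.
  apply H; [|lra|].
  - intros t. eapply deq. apply d_minus. apply d_minus.
    apply (d_mult (fun t => t ^ 2) (fun _ => /2)). apply is_derive_pow, d_id. apply d_const.
    apply (d_mult (fun _ => cc) (fun t => t ^ 4)). apply d_const. apply is_derive_pow, d_id.
    apply (d_ln cosh). apply d_cosh1. apply cosh_pos.
    simpl; field. apply Rgt_not_eq, cosh_pos.
  - intros t Ht. pose proof (F3 t ltac:(lra)). pose proof (cosh_pos t).
    assert (sinh t / cosh t <= t - 4 * cc * t ^ 3).
    { unfold Rdiv. apply (Rmult_le_reg_r (cosh t)); auto. rewrite Rmult_assoc, Rinv_l by lra. lra. }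
    lra.
Qed.

Lemma FA p : Rabs p <= 1/3 -> cosh p <= exp (p ^ 2 / 2 - cc * p ^ 4).
Proof.
  intros Hp. rewrite <- (exp_ln (cosh p)) by apply cosh_pos. apply exp_le.
  destruct (Rle_dec 0 p).
  - apply FA0. rewrite Rabs_right in Hp; lra.
  - rewrite <- cosh_even. replace (p ^ 2) with ((-p) ^ 2) by ring. replace (p ^ 4) with ((-p) ^ 4) by ring.
    apply FA0. rewrite Rabs_left in Hp; lra.
Qed.

Lemma cosh_le_exp p : 0 <= p -> cosh p <= exp p.
Proof. intros. unfold cosh. assert (exp (-p) <= exp p) by (apply exp_le; lra). lra. Qed.

Lemma FB0 p : 1/3 <= p -> ln (cosh p) <= (1/2 - kap) * p ^ 2.
Proof.
  intros Hp.
  assert (H := mono (fun t => t ^ 2 / 2 - ln (cosh t)) (fun t => t - sinh t / cosh t) (1/3) p).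
  cbv beta in H.
  assert (Hm : (1/3) ^ 2 / 2 - ln (cosh (1/3)) <= p ^ 2 / 2 - ln (cosh p)).
  { apply H; [|lra|].
    - intros t. eapply deq. apply d_minus.
      apply (d_mult (fun t => t ^ 2) (fun _ => /2)). apply is_derive_pow, d_id. apply d_const.
      apply (d_ln cosh). apply d_cosh1. apply cosh_pos.
      simpl; field. apply Rgt_not_eq, cosh_pos.
    - intros t Ht. pose proof (F1 t ltac:(lra)). pose proof (cosh_pos t).
      assert (sinh t / cosh t <= t).
      { unfold Rdiv. apply (Rmult_le_reg_r (cosh t)); auto. rewrite Rmult_assoc, Rinv_l by lra. lra. }
      lra. }
  pose proof (FA0 (1/3) ltac:(lra)).
  assert (Hl : ln (cosh p) <= p).
  { rewrite <- (ln_exp p) at 2. apply ln_le'. apply cosh_pos. apply cosh_le_exp; lra. }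
  assert (Hc : 0 < cc) by (rewrite cc_val; lra).
  unfold kap. destruct (Rle_dec p 4).
  - assert (p ^ 2 <= 16) by nra. nra.
  - assert (cc <= 1) by (rewrite cc_val; lra). nra.
Qed.

Lemma FB p : 1/3 <= Rabs p -> cosh p <= exp ((1/2 - kap) * p ^ 2).
Proof.
  intros Hp. rewrite <- (exp_ln (cosh p)) by apply cosh_pos. apply exp_le.
  destruct (Rle_dec 0 p).
  - apply FB0. rewrite Rabs_right in Hp; lra.
  - rewrite <- cosh_even. replace (p ^ 2) with ((-p) ^ 2) by ring.
    apply FB0. rewrite Rabs_left in Hp; lra.
Qed.

Lemma exp_pow y n : exp y ^ n = exp (INR n * y).
Proof.
  induction n.
  - simpl. rewrite Rmult_0_l, exp_0. reflexivity.
  - simpl pow. rewrite IHn, <- exp_plus, S_INR. f_equal. ring.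
Qed.

Lemma sin_le_id q : 0 <= q -> sin q <= q.
Proof.
  intros Hq. assert (H := mono (fun t => t - sin t) (fun t => 1 - cos t) 0 q).
  cbv beta in H. rewrite sin_0 in H.
  enough (0 - 0 <= q - sin q) by lra. apply H; auto.
  - intros t. eapply deq. apply d_minus. apply d_id. apply is_derive_sin. simpl; ring.
  - intros t _. pose proof (COS_bound t). lra.
Qed.

Lemma sin_ge_mid q : 0 <= q -> - q <= sin q.
Proof.
  intros Hq. assert (H := mono (fun t => t + sin t) (fun t => 1 + cos t) 0 q).
  cbv beta in H. rewrite sin_0 in H.
  enough (0 + 0 <= q + sin q) by lra. apply H; auto.
  - intros t. eapply deq. apply d_plus. apply d_id. apply is_derive_sin. simpl; ring.
  - intros t _. pose proof (COS_bound t). lra.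
Qed.

Lemma sin2_le q : sin q ^ 2 <= q ^ 2.
Proof.
  destruct (Rle_dec 0 q).
  - pose proof (sin_le_id q r). pose proof (sin_ge_mid q r). nra.
  - pose proof (sin_le_id (-q) ltac:(lra)). pose proof (sin_ge_mid (-q) ltac:(lra)).
    rewrite sin_neg in *. nra.
Qed.

Lemma cos_lb q : 0 <= q -> 1 - q ^ 2 / 2 <= cos q.
Proof.
  intros Hq. assert (H := mono (fun t => cos t - 1 + t ^ 2 / 2) (fun t => - sin t + t) 0 q).
  cbv beta in H. rewrite cos_0 in H.
  enough (1 - 1 + 0 ^ 2 / 2 <= cos q - 1 + q ^ 2 / 2) by lra. apply H; auto.
  - intros t. eapply deq. apply d_plus. apply d_minus. apply is_derive_cos. apply d_const.
    apply (d_mult (fun t => t ^ 2) (fun _ => /2)). apply is_derive_pow, d_id. apply d_const.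
    simpl; field.
  - intros t Ht. pose proof (sin_le_id t (proj1 Ht)). lra.
Qed.

Lemma sin_lb3 q : 0 <= q -> q - q ^ 3 / 6 <= sin q.
Proof.
  intros Hq. assert (H := mono (fun t => sin t - t + t ^ 3 / 6) (fun t => cos t - 1 + t ^ 2 / 2) 0 q).
  cbv beta in H. rewrite sin_0 in H.
  enough (0 - 0 + 0 ^ 3 / 6 <= sin q - q + q ^ 3 / 6) by lra. apply H; auto.
  - intros t. eapply deq. apply d_plus. apply d_minus. apply is_derive_sin. apply d_id.
    apply (d_mult (fun t => t ^ 3) (fun _ => /6)). apply is_derive_pow, d_id. apply d_const.
    simpl; field.
  - intros t Ht. pose proof (cos_lb t (proj1 Ht)). lra.
Qed.

Lemma sin2_ge q : q ^ 2 - q ^ 4 / 3 <= sin q ^ 2.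
Proof.
  assert (forall q, 0 <= q -> q ^ 2 - q ^ 4 / 3 <= sin q ^ 2).
  { intros u Hu. destruct (Rle_dec (u ^ 2) 6).
    - pose proof (sin_lb3 u Hu). assert (0 <= u - u ^ 3 / 6) by nra.
      assert ((u - u ^ 3 / 6) ^ 2 <= sin u ^ 2) by (apply pow_incr; lra). nra.
    - assert (u ^ 2 - u ^ 4 / 3 <= 0) by nra. assert (0 <= sin u ^ 2) by nra. lra. }
  destruct (Rle_dec 0 q). auto.
  replace (q ^ 2 - q ^ 4 / 3) with ((-q) ^ 2 - (-q) ^ 4 / 3) by field.
  replace (sin q ^ 2) with (sin (-q) ^ 2) by (rewrite sin_neg; ring). apply H; lra.
Qed.

Lemma sinh2_le p : sinh p ^ 2 <= p ^ 2 * cosh p ^ 2.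
Proof.
  destruct (Rle_dec 0 p).
  - pose proof (F1 p r). pose proof (sinh_ge0 p r). nra.
  - pose proof (F1 (-p) ltac:(lra)). pose proof (sinh_ge0 (-p) ltac:(lra)).
    rewrite sinh_odd, cosh_even in *. nra.
Qed.

Lemma inv_cosh2 p : cosh p ^ 2 * (1 - p ^ 2) <= 1.
Proof. pose proof (sinh2_le p). pose proof (cosh_sinh p). nra. Qed.

Lemma mod_bound (n : nat) (r al t x : R) : 0 < r -> INR n * r ^ 4 = 1 -> al = INR n * r ^ 2 ->
  exp (al * t ^ 2 / 2) * sqrt (cosh (r * x) ^ 2 - sin (r * t) ^ 2) ^ n
  <= cosh (r * x) ^ n * exp (t ^ 2 * x ^ 2 / 2 + t ^ 4 / 6).
Proof.
  intros Hr Hn Hal.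
  set (p := r * x). set (q := r * t).
  set (A := cosh p ^ 2). set (S := sin q ^ 2).
  assert (HA : 1 <= A) by (unfold A; pose proof (cosh_ge1 p); nra).
  assert (HS : 0 <= S <= 1) by (unfold S; pose proof (SIN_bound q); nra).
  set (w := S / A).
  assert (Hw : A - S = A * (1 - w)) by (unfold w; field; lra).
  assert (HQ : sqrt (A - S) <= cosh p * exp (- w / 2)).
  { rewrite <- (sqrt_pow2 (cosh p * exp (- w / 2))).
    2: { apply Rmult_le_pos. pose proof (cosh_pos p); lra. left; apply exp_pos. }
    apply sqrt_le_1_alt. rewrite Hw, Rpow_mult_distr. fold A.
    replace (exp (- w / 2) ^ 2) with (exp (- w)).
    2: { rewrite exp_pow. f_equal. simpl. field. }
    pose proof (exp_ineq1_le (- w)). nra. }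
  assert (HQn : sqrt (A - S) ^ n <= cosh p ^ n * exp (- INR n * w / 2)).
  { replace (exp (- INR n * w / 2)) with (exp (- w / 2) ^ n) by (rewrite exp_pow; f_equal; field).
    rewrite <- Rpow_mult_distr. apply pow_incr. split; auto. apply sqrt_pos. }
  assert (Hnw : al * t ^ 2 - t ^ 4 / 3 - t ^ 2 * x ^ 2 <= INR n * w).
  { assert (Hinv : 1 - p ^ 2 <= / A).
    { apply (Rmult_le_reg_r A). lra. rewrite Rinv_l by lra. pose proof (inv_cosh2 p). fold A in H. lra. }
    assert (HwS : S * (1 - p ^ 2) <= w) by (unfold w; unfold Rdiv; apply Rmult_le_compat_l; lra).
    pose proof (sin2_ge q) as S1. pose proof (sin2_le q) as S2. fold S in S1, S2.
    assert (Hn0 : 0 <= INR n) by apply pos_INR.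
    assert (E1 : INR n * q ^ 2 = al * t ^ 2) by (unfold q; rewrite Hal; ring).
    assert (E2 : INR n * q ^ 4 = t ^ 4) by (unfold q; replace ((r*t)^4) with (r^4 * t^4) by ring;
                 rewrite <- Rmult_assoc, Hn; ring).
    assert (E3 : INR n * (q ^ 2 * p ^ 2) = t ^ 2 * x ^ 2) by (unfold q, p;
                 replace ((r*t)^2 * (r*x)^2) with (r^4 * (t^2 * x^2)) by ring; rewrite <- Rmult_assoc, Hn; ring).
    assert (S * p ^ 2 <= q ^ 2 * p ^ 2) by (apply Rmult_le_compat_r; [nra | lra]).
    assert (INR n * (q ^ 2 - q ^ 4 / 3 - q ^ 2 * p ^ 2) <= INR n * w).
    { apply Rmult_le_compat_l; auto. nra. }
    replace (INR n * (q ^ 2 - q ^ 4 / 3 - q ^ 2 * p ^ 2)) with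
      (INR n * q ^ 2 - INR n * q ^ 4 / 3 - INR n * (q ^ 2 * p ^ 2)) in H0 by field.
    rewrite E1, E2, E3 in H0. lra. }
  assert (Hcn : 0 <= cosh p ^ n) by (apply pow_le; pose proof (cosh_pos p); lra).
  apply Rle_trans with (exp (al * t ^ 2 / 2) * (cosh p ^ n * exp (- INR n * w / 2))).
  { apply Rmult_le_compat_l. left; apply exp_pos. exact HQn. }
  replace (exp (al * t ^ 2 / 2) * (cosh p ^ n * exp (- INR n * w / 2))) with
     (cosh p ^ n * exp (al * t ^ 2 / 2 + - INR n * w / 2)) by (rewrite exp_plus; ring).
  apply Rmult_le_compat_l; auto. apply exp_le. lra.
Qed.

Definition rr (n : nat) := Rpower (INR n) (- / 4).

Lemma rr_pos n : 0 < rr n.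
Proof. unfold rr, Rpower. apply exp_pos. Qed.

Lemma rr4 n : (1 <= n)%nat -> INR n * rr n ^ 4 = 1.
Proof.
  intros Hn. assert (H0 : 0 < INR n) by (apply lt_0_INR; lia).
  unfold rr. rewrite <- Rpower_pow by (unfold Rpower; apply exp_pos).
  rewrite Rpower_mult. replace (- / 4 * INR 4) with (- (1)) by (simpl; field).
  rewrite Rpower_Ropp, Rpower_1 by auto. field. lra.
Qed.

Lemma rr2 n : (1 <= n)%nat -> sqrt (INR n) = INR n * rr n ^ 2.
Proof.
  intros Hn. pose proof (rr4 n Hn). pose proof (rr_pos n).
  assert (Hn0 : 0 < INR n) by (apply lt_0_INR; lia).
  rewrite <- (sqrt_pow2 (INR n * rr n ^ 2)) by (apply Rmult_le_pos; [lra|apply pow_le; lra]).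
  f_equal. replace ((INR n * rr n ^ 2) ^ 2) with (INR n * (INR n * rr n ^ 4)) by ring.
  rewrite H. ring.
Qed.

Lemma psiA n x : (1 <= n)%nat -> Rabs (x * rr n) <= 1/3 -> psi n x <= exp (- cc * x ^ 4).
Proof.
  intros Hn Hx. unfold psi. fold (rr n).
  pose proof (rr4 n Hn) as H4. pose proof (rr2 n Hn) as H2.
  assert (Hc : cosh (x * rr n) ^ n <= exp (sqrt (INR n) * x ^ 2 / 2 - cc * x ^ 4)).
  { apply Rle_trans with (exp ((x * rr n) ^ 2 / 2 - cc * (x * rr n) ^ 4) ^ n).
    - apply pow_incr. split. left; apply cosh_pos. apply FA; auto.
    - rewrite exp_pow. apply exp_le. rewrite H2.
      replace (INR n * ((x * rr n) ^ 2 / 2 - cc * (x * rr n) ^ 4)) with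
        (INR n * rr n ^ 2 * x ^ 2 / 2 - cc * x ^ 4 * (INR n * rr n ^ 4)) by field.
      rewrite H4. lra. }
  apply Rle_trans with (exp (- sqrt (INR n) * x ^ 2 / 2) * exp (sqrt (INR n) * x ^ 2 / 2 - cc * x ^ 4)).
  - apply Rmult_le_compat_l; auto. left; apply exp_pos.
  - rewrite <- exp_plus. apply exp_le. lra.
Qed.

Lemma psiB n x : (1 <= n)%nat -> 1/3 <= Rabs (x * rr n) -> psi n x <= exp (- kap * sqrt (INR n) * x ^ 2).
Proof.
  intros Hn Hx. unfold psi. fold (rr n).
  pose proof (rr4 n Hn) as H4. pose proof (rr2 n Hn) as H2.
  assert (Hc : cosh (x * rr n) ^ n <= exp ((1/2 - kap) * sqrt (INR n) * x ^ 2)).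
  { apply Rle_trans with (exp ((1/2 - kap) * (x * rr n) ^ 2) ^ n).
    - apply pow_incr. split. left; apply cosh_pos. apply FB; auto.
    - rewrite exp_pow. apply exp_le. rewrite H2. right. ring. }
  apply Rle_trans with (exp (- sqrt (INR n) * x ^ 2 / 2) * exp ((1/2 - kap) * sqrt (INR n) * x ^ 2)).
  - apply Rmult_le_compat_l; auto. left; apply exp_pos.
  - rewrite <- exp_plus. apply exp_le. lra.
Qed.

Lemma exp_ge2 y : 0 <= y -> 1 + y + y ^ 2 / 2 <= exp y.
Proof.
  intros Hy. assert (H := mono (fun t => exp t - 1 - t - t ^ 2 / 2) (fun t => exp t - 1 - t) 0 y).
  cbv beta in H. rewrite exp_0 in H.
  enough (1 - 1 - 0 - 0 ^ 2 / 2 <= exp y - 1 - y - y ^ 2 / 2) by lra. apply H; auto.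
  - intros t. eapply deq. apply d_minus. apply d_minus. apply d_minus. apply is_derive_exp. apply d_const. apply d_id.
    apply (d_mult (fun t => t ^ 2) (fun _ => /2)). apply is_derive_pow, d_id. apply d_const.
    simpl; field.
  - intros t _. pose proof (exp_ineq1_le t). lra.
Qed.

Definition gfun (b x : R) := exp (- cc * x ^ 4 + b ^ 2 * x ^ 2 / 2 + b ^ 4 / 6).
Definition Tfun (b Q x : R) := exp (b ^ 4 / 6) * (2 / (1 + Q ^ 2 * x ^ 2)).
Definition Qn (n : nat) := kap * sqrt (INR n) / (6 * rr n).

Lemma Tfun_pos b Q x : 0 < Tfun b Q x.
Proof. unfold Tfun. apply Rmult_lt_0_compat. apply exp_pos. apply Rdiv_lt_0_compat. lra. nra. Qed.
Lemma gfun_pos b x : 0 < gfun b x.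
Proof. unfold gfun. apply exp_pos. Qed.

Lemma point_bound n b t xi x : (1 <= n)%nat -> t ^ 2 = b ^ 2 -> b ^ 2 <= kap * sqrt (INR n) ->
  cmod (Fp (sqrt (INR n)) (rr n) xi n x t) <= exp (- xi * t) * (gfun b x + Tfun b (Qn n) x).
Proof.
  intros Hn Ht Hb.
  pose proof (rr4 n Hn) as H4. pose proof (rr2 n Hn) as H2. pose proof (rr_pos n) as Hr.
  assert (H0 : 0 < INR n) by (apply lt_0_INR; lia).
  rewrite cmod_Fp.
  assert (Hmb := mod_bound n (rr n) (sqrt (INR n)) t x Hr H4 H2).
  set (al := sqrt (INR n)) in *.
  set (E := exp (b ^ 2 * x ^ 2 / 2 + b ^ 4 / 6)).
  assert (Hpsi : psi n x = exp (- al * x ^ 2 / 2) * cosh (rr n * x) ^ n).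
  { unfold psi. fold (rr n). rewrite Rmult_comm with (r1 := x). reflexivity. }
  assert (Step1 : exp (- al * (x ^ 2 - t ^ 2) / 2 - xi * t) * sqrt (cosh (rr n * x) ^ 2 - sin (rr n * t) ^ 2) ^ n
     <= exp (- xi * t) * (psi n x * E)).
  { replace (exp (- al * (x ^ 2 - t ^ 2) / 2 - xi * t)) with
      (exp (- xi * t) * exp (- al * x ^ 2 / 2) * exp (al * t ^ 2 / 2))
      by (rewrite <- !exp_plus; f_equal; field).
    rewrite Hpsi. unfold E.
    replace (b ^ 2 * x ^ 2 / 2 + b ^ 4 / 6) with (t ^ 2 * x ^ 2 / 2 + t ^ 4 / 6)
      by (replace (t ^ 4) with ((t ^ 2) ^ 2) by ring; rewrite Ht; field).
    pose proof (exp_pos (- xi * t)). pose proof (exp_pos (- al * x ^ 2 / 2)).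
    replace (exp (- xi * t) * exp (- al * x ^ 2 / 2) * exp (al * t ^ 2 / 2) *
       sqrt (cosh (rr n * x) ^ 2 - sin (rr n * t) ^ 2) ^ n) with
      (exp (- xi * t) * exp (- al * x ^ 2 / 2) * (exp (al * t ^ 2 / 2) *
       sqrt (cosh (rr n * x) ^ 2 - sin (rr n * t) ^ 2) ^ n)) by ring.
    replace (exp (- xi * t) * (exp (- al * x ^ 2 / 2) * cosh (rr n * x) ^ n * exp (t ^ 2 * x ^ 2 / 2 + t ^ 4 / 6)))
      with (exp (- xi * t) * exp (- al * x ^ 2 / 2) * (cosh (rr n * x) ^ n * exp (t ^ 2 * x ^ 2 / 2 + t ^ 4 / 6))) by ring.
    apply Rmult_le_compat_l. nra. exact Hmb. }
  eapply Rle_trans. exact Step1. apply Rmult_le_compat_l. left; apply exp_pos.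
  pose proof (Tfun_pos b (Qn n) x). pose proof (gfun_pos b x).
  destruct (Rle_dec (Rabs (x * rr n)) (1/3)).
  - assert (psi n x * E <= gfun b x); [|lra].
    replace (gfun b x) with (exp (- cc * x ^ 4) * E) by (unfold gfun, E; rewrite <- exp_plus; f_equal; ring).
    apply Rmult_le_compat_r. left; apply exp_pos. apply psiA; auto.
  - assert (psi n x * E <= Tfun b (Qn n) x); [|lra].
    assert (HB := psiB n x Hn ltac:(lra)). fold al in HB.
    assert (Hx : 1/3 <= Rabs x * rr n) by (rewrite Rabs_mult, (Rabs_right (rr n)) in n0 by lra; lra).
    assert (Hal : 0 <= al) by apply sqrt_pos.
    set (Q := Qn n).
    assert (HQ : Q * Rabs x <= kap * al / 2 * x ^ 2).
    { unfold Q, Qn. fold al. replace (x ^ 2) with (Rabs x * Rabs x) by (rewrite <- Rabs_mult, Rabs_right by nra; ring).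
      assert (Rabs x >= 0) by (apply Rle_ge, Rabs_pos).
      assert (Hk : 0 < kap) by (unfold kap; rewrite cc_val; lra).
      assert (/ (6 * rr n) <= Rabs x / 2).
      { apply (Rmult_le_reg_r (6 * rr n)). lra. rewrite Rinv_l by lra. nra. }
      assert (0 <= kap * al) by nra.
      unfold Rdiv. rewrite Rmult_assoc.
      replace (kap * al * / 2 * (Rabs x * Rabs x)) with ((kap * al) * Rabs x * (Rabs x / 2)) by field.
      replace (kap * al * (/ (6 * rr n) * Rabs x)) with ((kap * al) * Rabs x * (/ (6 * rr n))) by ring.
      apply Rmult_le_compat_l; nra. }
    apply Rle_trans with (exp (b ^ 4 / 6) * exp (- (Q * Rabs x))).
    + unfold E. rewrite <- !exp_plus.
      apply Rle_trans with (exp (- kap * al * x ^ 2) * exp (b ^ 2 * x ^ 2 / 2 + b ^ 4 / 6)).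
      * apply Rmult_le_compat_r. left; apply exp_pos. exact HB.
      * rewrite <- exp_plus. apply exp_le. assert (0 <= x ^ 2) by nra.
        assert (b ^ 2 * x ^ 2 <= kap * al * x ^ 2) by (apply Rmult_le_compat_r; auto). nra.
    + unfold Tfun. apply Rmult_le_compat_l. left; apply exp_pos.
      assert (HQx : 0 <= Q * Rabs x).
      { unfold Q, Qn. apply Rmult_le_pos. 2: apply Rabs_pos. unfold Rdiv. apply Rmult_le_pos.
        apply Rmult_le_pos. unfold kap; rewrite cc_val; lra. fold al; lra. left; apply Rinv_0_lt_compat; lra. }
      pose proof (exp_ge2 (Q * Rabs x) HQx).
      rewrite exp_Ropp. apply (Rmult_le_reg_r (exp (Q * Rabs x))). apply exp_pos.
      rewrite Rinv_l by (apply Rgt_not_eq, exp_pos).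
      replace (Q ^ 2 * x ^ 2) with ((Q * Rabs x) ^ 2) by (rewrite Rpow_mult_distr, pow2_abs; reflexivity).
      apply (Rmult_le_reg_r (1 + (Q * Rabs x) ^ 2)). nra.
      field_simplify; nra.
Qed.

Lemma exR (f : R -> R) a b : (forall x, ex_derive f x) -> ex_RInt f a b.
Proof.
  intros H. apply (ex_RInt_continuous (V:=R_CompleteNormedModule)). intros z _.
  exact (ex_derive_continuous (K:=R_AbsRing) (V:=R_NormedModule) f z (H z)).
Qed.

Lemma RInt_nonneg (f : R -> R) a b : a <= b -> ex_RInt f a b -> (forall x, a <= x <= b -> 0 <= f x) ->
  0 <= RInt f a b.
Proof.
  intros Hab Hex H. apply Rle_trans with (RInt (fun _ => 0) a b).
  - rewrite RInt_const. unfold scal; simpl; unfold mult; simpl. lra.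
  - apply RInt_le; auto. apply ex_RInt_const. intros; apply H; lra.
Qed.

Lemma RInt_le' (f g : R -> R) a b : a <= b -> ex_RInt f a b -> ex_RInt g a b ->
  (forall x, a <= x <= b -> f x <= g x) -> RInt f a b <= RInt g a b.
Proof. intros; apply RInt_le; auto. intros; apply H2; lra. Qed.

Lemma Chasles (f : R -> R) a b c : (forall x, ex_derive f x) -> RInt f a b + RInt f b c = RInt f a c.
Proof. intros H. apply (RInt_Chasles (V:=R_CompleteNormedModule)); apply exR; auto. Qed.

Lemma RInt_sub (f : R -> R) a A C b : (forall x, ex_derive f x) -> (forall x, 0 <= f x) ->
  a <= A -> A <= C -> C <= b -> RInt f A C <= RInt f a b.
Proof.
  intros Hd H0 h1 h2 h3.
  rewrite <- (Chasles f a A b), <- (Chasles f A C b) by auto.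
  assert (0 <= RInt f a A) by (apply RInt_nonneg; auto; apply exR; auto).
  assert (0 <= RInt f C b) by (apply RInt_nonneg; auto; apply exR; auto).
  lra.
Qed.

Lemma RInt_even (f : R -> R) a b : (forall x, ex_derive f x) -> (forall y, f (- y) = f y) ->
  RInt f (- b) (- a) = RInt f a b.
Proof.
  intros Hd He.
  assert (H := is_RInt_comp_opp (V:=R_NormedModule) f a b (RInt f (- a) (- b))).
  assert (H' := is_RInt_unique _ _ _ _ (H (RInt_correct _ _ _ (exR f _ _ Hd)))).
  rewrite (RInt_ext _ (fun y => opp (f y))) in H' by (intros; rewrite He; reflexivity).
  rewrite (RInt_opp (V:=R_CompleteNormedModule)) in H' by (apply exR; auto).
  rewrite <- (opp_RInt_swap (V:=R_CompleteNormedModule) f (-b) (-a)) in H' by (apply exR; auto).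
  unfold opp in H'; simpl in H'. lra.
Qed.

Lemma RInt_shift (f : R -> R) d a b : (forall x, ex_derive f x) ->
  RInt (fun y => f (y - d)) a b = RInt f (a - d) (b - d).
Proof.
  intros Hd. assert (H := RInt_comp_lin (V:=R_CompleteNormedModule) f 1 (- d) a b (exR f _ _ Hd)).
  replace (1 * a + - d) with (a - d) in H by ring. replace (1 * b + - d) with (b - d) in H by ring.
  rewrite <- H. apply RInt_ext. intros x _. unfold scal; simpl; unfold mult; simpl.
  replace (1 * x + - d) with (x - d) by ring. ring.
Qed.

Lemma RInt_scale (f : R -> R) u a b : (forall x, ex_derive f x) -> u <> 0 ->
  RInt (fun y => f (u * y)) a b = / u * RInt f (u * a) (u * b).
Proof.
  intros Hd Hu. assert (H := RInt_comp_lin (V:=R_CompleteNormedModule) f u 0 a b (exR f _ _ Hd)).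
  rewrite !Rplus_0_r in H. rewrite <- H.
  rewrite (RInt_ext _ (fun y => scal (/ u) (scal u (f (u * y + 0))))).
  2: { intros x _. unfold scal; simpl; unfold mult; simpl. rewrite Rplus_0_r. field; auto. }
  rewrite (RInt_scal (V:=R_CompleteNormedModule)). reflexivity.
  apply (ex_RInt_comp_lin (V:=R_NormedModule) f). rewrite !Rplus_0_r. apply exR; auto.
Qed.

Lemma imp_upper (f : R -> R) l : improper_integral_R f l -> (forall x, ex_derive f x) ->
  (forall x, 0 <= f x) -> forall A C, A <= C -> RInt f A C <= l.
Proof.
  intros [Hi Hl] Hd H0 A C HAC.
  apply Rle_plus_epsilon. intros eps Heps.
  destruct (Hl eps (Rlt_gt _ _ Heps)) as [M HM].
  set (a := Rmin A (- M)). set (b := Rmax C M).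
  destruct (Hi a b) as [pr].
  specialize (HM a b pr (Rmin_r _ _) (Rmax_r _ _)).
  rewrite <- RInt_Reals in HM.
  assert (RInt f A C <= RInt f a b).
  { apply RInt_sub; auto. apply Rmin_l. apply Rmax_l. }
  apply Rabs_def2 in HM. lra.
Qed.

Lemma imp_lower (f : R -> R) l : improper_integral_R f l -> (forall x, ex_derive f x) ->
  (forall x, 0 <= f x) -> forall A C, A <= C -> RInt f A C <= l.
Proof. apply imp_upper. Qed.

Definition kfun (y : R) := exp (- y ^ 4 / 12).
Definition hfun (be B0 y : R) := exp (- y ^ 4 / 12 + be ^ 2 * y ^ 2 / 2 + B0).

Lemma kfun_d x : ex_derive kfun x.
Proof. unfold kfun. auto_derive. auto. Qed.
Lemma hfun_d be B0 x : ex_derive (hfun be B0) x.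
Proof. unfold hfun. auto_derive. auto. Qed.

Lemma k_half I Y : improper_integral_R kfun I -> 0 <= Y -> RInt kfun 0 Y <= I / 2.
Proof.
  intros HI HY.
  assert (E : RInt kfun (- Y) (- 0) = RInt kfun 0 Y).
  { apply RInt_even. apply kfun_d. intros; unfold kfun; f_equal; field. }
  rewrite Ropp_0 in E.
  assert (H := imp_upper kfun I HI kfun_d (fun x => Rlt_le _ _ (exp_pos _)) (- Y) Y ltac:(lra)).
  rewrite <- (Chasles kfun (-Y) 0 Y kfun_d) in H. lra.
Qed.

Lemma h_int I be B0 A C : improper_integral_R kfun I -> 0 <= be -> A <= C ->
  RInt (hfun be B0) A C <= exp (9 * be ^ 4 / 12 + B0) * (2 * sqrt 3 * be + I).
Proof.
  intros HI Hbe HAC.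
  set (d := sqrt 3 * be).
  assert (Hd : 0 <= d) by (unfold d; apply Rmult_le_pos; [apply sqrt_pos|lra]).
  assert (Hd2 : be ^ 2 = d ^ 2 / 3).
  { unfold d. rewrite Rpow_mult_distr, pow2_sqrt by lra. field. }
  set (E' := exp (9 * be ^ 4 / 12 + B0)).
  assert (HE' : E' = exp (d ^ 4 / 12 + B0)).
  { unfold E'. f_equal. replace (be ^ 4) with ((be ^ 2) ^ 2) by ring. rewrite Hd2. field. }
  set (X := Rmax (Rmax (Rabs A) (Rabs C)) d).
  assert (HX1 : Rmax (Rabs A) (Rabs C) <= X) by apply Rmax_l.
  assert (HX2 : d <= X) by apply Rmax_r.
  assert (HA1 : Rabs A <= X) by (eapply Rle_trans; [apply Rmax_l | exact HX1]).
  assert (HC1 : Rabs C <= X) by (eapply Rle_trans; [apply Rmax_r | exact HX1]).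
  assert (HA : - X <= A) by (pose proof (Rle_abs (-A)); rewrite Rabs_Ropp in *; lra).
  assert (HC : C <= X) by (pose proof (Rle_abs C); lra).
  assert (H0h : forall x, 0 <= hfun be B0 x) by (intros; left; apply exp_pos).
  assert (S1 : RInt (hfun be B0) A C <= RInt (hfun be B0) (- X) X) by (apply RInt_sub; auto; apply hfun_d).
  rewrite <- (Chasles _ (-X) (-d) X (hfun_d be B0)) in S1.
  rewrite <- (Chasles _ (-d) d X (hfun_d be B0)) in S1.
  assert (Hev : RInt (hfun be B0) (- X) (- d) = RInt (hfun be B0) d X).
  { apply RInt_even. apply hfun_d. intros; unfold hfun; f_equal; field. }
  assert (Mid : RInt (hfun be B0) (- d) d <= 2 * d * E').
  { apply Rle_trans with (RInt (fun _ => E') (- d) d).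
    - apply RInt_le'. lra. apply exR, hfun_d. apply ex_RInt_const.
      intros y _. rewrite HE'. unfold hfun. apply exp_le. rewrite Hd2.
      assert (0 <= (y ^ 2 - d ^ 2) ^ 2) by apply pow2_ge_0.
      assert (d ^ 4 / 12 + B0 - (- y ^ 4 / 12 + d ^ 2 / 3 * y ^ 2 / 2 + B0) = (y ^ 2 - d ^ 2) ^ 2 / 12) by field.
      lra.
    - rewrite RInt_const. unfold scal; simpl; unfold mult; simpl. lra. }
  assert (Tail : RInt (hfun be B0) d X <= E' * (I / 2)).
  { apply Rle_trans with (RInt (fun y => E' * kfun (y - d)) d X).
    - apply RInt_le'. lra. apply exR, hfun_d. apply exR. intros; unfold kfun; auto_derive; auto.
      intros y Hy. rewrite HE'. unfold hfun, kfun. rewrite <- exp_plus. apply exp_le. rewrite Hd2.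
      assert (Id : y ^ 4 - 2 * d ^ 2 * y ^ 2 - (y - d) ^ 4 + d ^ 4 = 4 * (y - d) ^ 3 * d + 4 * (y - d) ^ 2 * d ^ 2) by ring.
      assert (0 <= 4 * (y - d) ^ 3 * d + 4 * (y - d) ^ 2 * d ^ 2).
      { assert (0 <= y - d) by lra. assert (0 <= (y-d)^3) by (apply pow_le; lra).
        assert (0 <= (y-d)^3 * d) by (apply Rmult_le_pos; lra).
        assert (0 <= (y-d)^2 * d^2) by (apply Rmult_le_pos; apply pow2_ge_0). lra. }
      assert (d ^ 4 / 12 + B0 + - (y - d) ^ 4 / 12 - (- y ^ 4 / 12 + d ^ 2 / 3 * y ^ 2 / 2 + B0)
        = (y ^ 4 - 2 * d ^ 2 * y ^ 2 - (y - d) ^ 4 + d ^ 4) / 12) by field.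
      lra.
    - rewrite (RInt_ext _ (fun y => scal E' (kfun (y - d)))) by (intros; reflexivity).
      rewrite (RInt_scal (V:=R_CompleteNormedModule)).
      2: { apply exR. intros; unfold kfun; auto_derive; auto. }
      unfold scal; simpl; unfold mult; simpl.
      rewrite RInt_shift by apply kfun_d. replace (d - d) with 0 by ring.
      apply Rmult_le_compat_l. unfold E'; left; apply exp_pos. apply k_half; auto. lra. }
  assert (HE'0 : 0 <= E') by (unfold E'; left; apply exp_pos).
  unfold d in *. lra.
Qed.

Lemma I_nonneg I : improper_integral_R kfun I -> 0 <= I.
Proof.
  intros HI. assert (H := imp_upper kfun I HI kfun_d (fun x => Rlt_le _ _ (exp_pos _)) 0 0 (Rle_refl _)).
  rewrite RInt_point in H. exact H.
Qed.

Lemma I_lower I : improper_integral_R kfun I -> 11 / 6 <= I.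
Proof.
  intros HI. assert (H := imp_upper kfun I HI kfun_d (fun x => Rlt_le _ _ (exp_pos _)) (-1) 1 ltac:(lra)).
  assert (11 / 6 <= RInt kfun (-1) 1); [|lra].
  apply Rle_trans with (RInt (fun _ => 11/12) (-1) 1).
  - rewrite RInt_const. unfold scal; simpl; unfold mult; simpl. lra.
  - apply RInt_le'. lra. apply ex_RInt_const. apply exR, kfun_d.
    intros y Hy. unfold kfun. pose proof (exp_ineq1_le (- y ^ 4 / 12)).
    assert (y ^ 4 <= 1). { assert (y ^ 2 <= 1) by nra. replace (y ^ 4) with ((y^2)^2) by ring. nra. }
    lra.
Qed.

Lemma gfun_eq b x : gfun b x = hfun (b / lam) (b ^ 4 / 6) (lam * x).
Proof. unfold gfun, hfun, cc, lam. f_equal. field. Qed.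

Lemma g_int I b a c : improper_integral_R kfun I -> 0 <= b -> a <= c ->
  RInt (gfun b) a c <= 625 / 576 * exp (13 * b ^ 4 / 12) * (2 * sqrt 3 * b + I).
Proof.
  intros HI Hb Hac.
  pose proof (I_nonneg I HI) as HI0.
  rewrite (RInt_ext _ (fun x => hfun (b / lam) (b ^ 4 / 6) (lam * x))) by (intros; apply gfun_eq).
  rewrite RInt_scale. 2: apply hfun_d. 2: unfold lam; lra.
  assert (Hl : 0 < lam) by (unfold lam; lra).
  pose proof (h_int I (b / lam) (b ^ 4 / 6) (lam * a) (lam * c) HI
     ltac:(unfold Rdiv; apply Rmult_le_pos; [lra| left; apply Rinv_0_lt_compat; lra])
     ltac:(apply Rmult_le_compat_l; lra)) as H.
  assert (He : exp (9 * (b / lam) ^ 4 / 12 + b ^ 4 / 6) <= exp (13 * b ^ 4 / 12)).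
  { apply exp_le. unfold lam. assert (0 <= b ^ 4) by (apply pow_le; lra).
    replace (9 * (b / (24 / 25)) ^ 4 / 12 + b ^ 4 / 6) with (b ^ 4 * (9 * 390625 / 331776 / 12 + 1/6)) by field.
    replace (13 * b ^ 4 / 12) with (b ^ 4 * (13 / 12)) by field.
    apply Rmult_le_compat_l; lra. }
  assert (H3 : 0 <= sqrt 3) by apply sqrt_pos.
  assert (Hs : 0 <= 2 * sqrt 3 * (b / lam) + I).
  { unfold lam. assert (0 <= sqrt 3 * b) by nra. lra. }
  apply Rle_trans with (/ lam * (exp (13 * b ^ 4 / 12) * (2 * sqrt 3 * (b / lam) + I))).
  - apply Rmult_le_compat_l. left; apply Rinv_0_lt_compat; lra.
    eapply Rle_trans. exact H. apply Rmult_le_compat_r; auto.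
  - unfold lam. pose proof (exp_pos (13 * b ^ 4 / 12)).
    assert (0 <= sqrt 3 * b) by nra.
    replace (/ (24 / 25) * (exp (13 * b ^ 4 / 12) * (2 * sqrt 3 * (b / (24 / 25)) + I)))
      with (exp (13 * b ^ 4 / 12) * (625 / 576 * (2 * sqrt 3 * b) + 25 / 24 * I)) by field.
    replace (625 / 576 * exp (13 * b ^ 4 / 12) * (2 * sqrt 3 * b + I))
      with (exp (13 * b ^ 4 / 12) * (625 / 576 * (2 * sqrt 3 * b) + 625 / 576 * I)) by field.
    apply Rmult_le_compat_l; lra.
Qed.

Lemma Tfun_d b Q x : ex_derive (Tfun b Q) x.
Proof. unfold Tfun. auto_derive. nra. Qed.

Lemma T_int b Q a c : 0 < Q -> a <= c -> RInt (Tfun b Q) a c <= exp (b ^ 4 / 6) * (2 * PI / Q).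
Proof.
  intros HQ Hac.
  assert (H : is_RInt (Tfun b Q) a c
     (minus (exp (b ^ 4 / 6) * (2 / Q) * atan (Q * c)) (exp (b ^ 4 / 6) * (2 / Q) * atan (Q * a)))).
  { apply (is_RInt_derive (V:=R_CompleteNormedModule) (fun x => exp (b ^ 4 / 6) * (2 / Q) * atan (Q * x))).
    - intros x _. eapply deq.
      + apply (d_mult (fun _ => exp (b ^ 4 / 6) * (2 / Q)) (fun x => atan (Q * x))). apply d_const.
        apply (is_derive_comp atan (fun x => Q * x)). apply is_derive_atan.
        apply (d_mult (fun _ => Q) (fun x => x)). apply d_const. apply d_id.
      + unfold Tfun, scal; simpl; unfold mult; simpl. unfold Rsqr. field. split; nra.
    - intros x _. exact (ex_derive_continuous (K:=R_AbsRing) (V:=R_NormedModule) _ x (Tfun_d b Q x)). }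
  rewrite (is_RInt_unique _ _ _ _ H).
  change (minus ?A ?B) with (A + - B).
  pose proof (atan_bound (Q * c)). pose proof (atan_bound (Q * a)).
  pose proof (exp_pos (b ^ 4 / 6)).
  replace (exp (b ^ 4 / 6) * (2 / Q) * atan (Q * c) + - (exp (b ^ 4 / 6) * (2 / Q) * atan (Q * a)))
    with (exp (b ^ 4 / 6) * (2 / Q) * (atan (Q * c) - atan (Q * a))) by ring.
  replace (exp (b ^ 4 / 6) * (2 * PI / Q)) with (exp (b ^ 4 / 6) * (2 / Q) * PI) by (field; lra).
  apply Rmult_le_compat_l. apply Rmult_le_pos. lra. unfold Rdiv; apply Rmult_le_pos. lra. left; apply Rinv_0_lt_compat; lra.
  lra.
Qed.

Lemma major_int I b Q a c : improper_integral_R kfun I -> 0 <= b -> 6 <= Q -> a <= c ->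
  RInt (fun x => gfun b x + Tfun b Q x) a c <= K I b.
Proof.
  intros HI Hb HQ Hac.
  rewrite (RInt_plus (V:=R_CompleteNormedModule) (gfun b) (Tfun b Q)).
  2: { apply exR. intros; unfold gfun; auto_derive; auto. }
  2: { apply exR. apply Tfun_d. }
  unfold plus; simpl.
  pose proof (g_int I b a c HI Hb Hac). pose proof (T_int b Q a c ltac:(lra) Hac).
  pose proof (I_lower I HI). pose proof PI_4.
  assert (exp (b ^ 4 / 6) <= exp (13 * b ^ 4 / 12)).
  { apply exp_le. assert (0 <= b ^ 4) by (apply pow_le; lra). lra. }
  assert (2 * PI / Q <= 4 / 3).
  { unfold Rdiv. apply Rle_trans with (2 * 4 * / 6).
    - apply Rmult_le_compat. pose proof PI_RGT_0; lra. left; apply Rinv_0_lt_compat; lra. lra.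
      apply Rinv_le_contravar; lra.
    - lra. }
  assert (0 <= 2 * PI / Q) by (unfold Rdiv; apply Rmult_le_pos; [pose proof PI_RGT_0; lra | left; apply Rinv_0_lt_compat; lra]).
  assert (H6 : exp (b ^ 4 / 6) * (2 * PI / Q) <= exp (13 * b ^ 4 / 12) * (4 / 3)).
  { apply Rmult_le_compat; auto. left; apply exp_pos. }
  unfold K. assert (0 <= sqrt 3 * b) by (apply Rmult_le_pos; [apply sqrt_pos|lra]).
  pose proof (exp_pos (13 * b ^ 4 / 12)).
  assert (exp (13 * b ^ 4 / 12) * (4 / 3) <= exp (13 * b ^ 4 / 12) * ((2 - 625 / 576) * (2 * sqrt 3 * b + I))).
  { apply Rmult_le_compat_l; lra. }
  nra.
Qed.

Lemma nat_large A : exists N : nat, A <= INR N.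
Proof.
  destruct (archimed A) as [H1 H2]. exists (Z.to_nat (up A)).
  destruct (Z_le_gt_dec 0 (up A)) as [h|h].
  - rewrite INR_IZR_INZ, Z2Nat.id by auto. lra.
  - assert (IZR (up A) < 0) by (apply IZR_lt; lia). pose proof (pos_INR (Z.to_nat (up A))). lra.
Qed.

Lemma sumsq a b : 0 <= a ^ 2 + b ^ 2.
Proof. pose proof (pow2_ge_0 a); pose proof (pow2_ge_0 b); lra. Qed.

Lemma CS a b c d : a * c + b * d <= sqrt (a ^ 2 + b ^ 2) * sqrt (c ^ 2 + d ^ 2).
Proof.
  rewrite <- sqrt_mult by apply sumsq.
  destruct (Rle_dec (a * c + b * d) 0).
  - pose proof (sqrt_pos ((a ^ 2 + b ^ 2) * (c ^ 2 + d ^ 2))). lra.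
  - rewrite <- (sqrt_pow2 (a * c + b * d)) by lra. apply sqrt_le_1_alt.
    assert (0 <= (a * d - b * c) ^ 2) by apply pow2_ge_0.
    replace ((a ^ 2 + b ^ 2) * (c ^ 2 + d ^ 2)) with ((a * c + b * d) ^ 2 + (a * d - b * c) ^ 2) by ring.
    lra.
Qed.

Lemma sqrt_abs_le p q : sqrt (p ^ 2 + q ^ 2) <= Rabs p + Rabs q.
Proof.
  rewrite <- (sqrt_pow2 (Rabs p + Rabs q)) by (pose proof (Rabs_pos p); pose proof (Rabs_pos q); lra).
  apply sqrt_le_1_alt. rewrite <- (pow2_abs p), <- (pow2_abs q).
  pose proof (Rabs_pos p); pose proof (Rabs_pos q). nra.
Qed.

Lemma norm_tri u v u' v' : sqrt (u ^ 2 + v ^ 2) <= sqrt (u' ^ 2 + v' ^ 2) + (Rabs (u - u') + Rabs (v - v')).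
Proof.
  set (N1 := sqrt (u' ^ 2 + v' ^ 2)). set (D := Rabs (u - u') + Rabs (v - v')).
  assert (HN : 0 <= N1) by apply sqrt_pos.
  assert (HD : sqrt ((u - u') ^ 2 + (v - v') ^ 2) <= D) by apply sqrt_abs_le.
  assert (HD0 : 0 <= sqrt ((u - u') ^ 2 + (v - v') ^ 2)) by apply sqrt_pos.
  pose proof (CS u' v' (u - u') (v - v')) as Hcs. fold N1 in Hcs.
  rewrite <- (sqrt_pow2 (N1 + D)) by lra. apply sqrt_le_1_alt.
  assert (E1 : N1 ^ 2 = u' ^ 2 + v' ^ 2) by (apply pow2_sqrt; pose proof (pow2_ge_0 u'); pose proof (pow2_ge_0 v'); lra).
  assert (E2 : sqrt ((u - u') ^ 2 + (v - v') ^ 2) ^ 2 = (u - u') ^ 2 + (v - v') ^ 2) by (apply pow2_sqrt; pose proof (pow2_ge_0 (u - u')); pose proof (pow2_ge_0 (v - v')); lra).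
  assert (N1 * sqrt ((u - u') ^ 2 + (v - v') ^ 2) <= N1 * D) by (apply Rmult_le_compat_l; auto).
  assert (sqrt ((u - u') ^ 2 + (v - v') ^ 2) ^ 2 <= D ^ 2) by (apply pow_incr; lra).
  replace (u ^ 2 + v ^ 2) with (u' ^ 2 + v' ^ 2 + 2 * (u' * (u - u') + v' * (v - v')) + ((u - u') ^ 2 + (v - v') ^ 2)) by ring.
  nra.
Qed.

Lemma cmod_RInt (f1 f2 : R -> R) a c : a <= c -> ex_RInt f1 a c -> ex_RInt f2 a c ->
  ex_RInt (fun x => sqrt (f1 x ^ 2 + f2 x ^ 2)) a c ->
  sqrt (RInt f1 a c ^ 2 + RInt f2 a c ^ 2) <= RInt (fun x => sqrt (f1 x ^ 2 + f2 x ^ 2)) a c.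
Proof.
  intros Hac H1 H2 H3.
  set (A := RInt f1 a c). set (B := RInt f2 a c). set (N := sqrt (A ^ 2 + B ^ 2)).
  set (S := RInt (fun x => sqrt (f1 x ^ 2 + f2 x ^ 2)) a c).
  assert (HS : 0 <= S) by (apply RInt_nonneg; auto; intros; apply sqrt_pos).
  destruct (Req_dec N 0) as [h|h]. { rewrite h; auto. }
  assert (HN : 0 < N) by (pose proof (sqrt_pos (A ^ 2 + B ^ 2)); fold N in H; lra).
  assert (E : N ^ 2 = RInt (fun x => A * f1 x + B * f2 x) a c).
  { unfold N. rewrite pow2_sqrt by apply sumsq.
    rewrite (RInt_plus (V:=R_CompleteNormedModule) (fun x => A * f1 x) (fun x => B * f2 x)).
    2: { apply (ex_RInt_scal (V:=R_NormedModule) f1); auto. }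
    2: { apply (ex_RInt_scal (V:=R_NormedModule) f2); auto. }
    rewrite (RInt_scal (V:=R_CompleteNormedModule) f1) by auto.
    rewrite (RInt_scal (V:=R_CompleteNormedModule) f2) by auto.
    unfold plus, scal; simpl; unfold mult; simpl. fold A B. ring. }
  assert (Hle : RInt (fun x => A * f1 x + B * f2 x) a c <= RInt (fun x => N * sqrt (f1 x ^ 2 + f2 x ^ 2)) a c).
  { apply RInt_le'; auto.
    - apply (ex_RInt_plus (V:=R_NormedModule) (fun x => A * f1 x) (fun x => B * f2 x)).
      apply (ex_RInt_scal (V:=R_NormedModule) f1); auto. apply (ex_RInt_scal (V:=R_NormedModule) f2); auto.
    - apply (ex_RInt_scal (V:=R_NormedModule) (fun x => sqrt (f1 x ^ 2 + f2 x ^ 2))); auto.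
    - intros x _. apply CS. }
  rewrite (RInt_scal (V:=R_CompleteNormedModule) (fun x => sqrt (f1 x ^ 2 + f2 x ^ 2))) in Hle by auto.
  change (scal ?X ?Y) with (X * Y) in Hle. fold S in Hle.
  rewrite <- E in Hle. apply (Rmult_le_reg_l N); auto. replace (N * N) with (N ^ 2) by ring. exact Hle.
Qed.

Lemma Hol_exd F : Hol F -> forall s x, ex_derive (fun y => fst (F y s)) x /\ ex_derive (fun y => snd (F y s)) x.
Proof.
  intros [F' [H1 [H2 _]]] s x. split; [exists (fst (F' x s)) | exists (snd (F' x s))]; auto.
Qed.

Lemma Hol_cmod_ex F : Hol F -> forall t a c, ex_RInt (fun x => cmod (F x t)) a c.
Proof.
  intros HF t a c. destruct HF as [F' [H1 [H2 _]]].
  apply (ex_RInt_continuous (V:=R_CompleteNormedModule)). intros z _.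
  apply continuity_pt_filterlim. unfold cmod.
  assert (Hc : continuity_pt (fun x => fst (F x t) ^ 2 + snd (F x t) ^ 2) z).
  { apply (deriv_cpt _ (fun x => INR 2 * fst (F' x t) * fst (F x t) ^ pred 2 + INR 2 * snd (F' x t) * snd (F x t) ^ pred 2)).
    intros x. apply d_plus; apply is_derive_pow; auto. }
  apply (continuity_pt_comp (fun x => fst (F x t) ^ 2 + snd (F x t) ^ 2) sqrt); auto.
  apply continuity_pt_sqrt. apply sumsq.
Qed.

Lemma snd_le_cmod z : Rabs (snd z) <= cmod z.
Proof.
  unfold cmod. rewrite <- (sqrt_pow2 (Rabs (snd z))) by apply Rabs_pos.
  apply sqrt_le_1_alt. rewrite pow2_abs. pose proof (pow2_ge_0 (fst z)). lra.
Qed.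
Lemma fst_le_cmod z : Rabs (fst z) <= cmod z.
Proof.
  unfold cmod. rewrite <- (sqrt_pow2 (Rabs (fst z))) by apply Rabs_pos.
  apply sqrt_le_1_alt. rewrite pow2_abs. pose proof (pow2_ge_0 (snd z)). lra.
Qed.

Lemma sqrt_n_ge1 n : (1 <= n)%nat -> 1 <= sqrt (INR n).
Proof.
  intros Hn. rewrite <- sqrt_1. apply sqrt_le_1_alt. apply (le_INR 1 n) in Hn. simpl in Hn. lra.
Qed.

Lemma vert n xi b eps : (1 <= n)%nat -> 0 <= b -> 0 < eps -> exists X, 0 <= X /\
  forall x s, X <= Rabs x -> Rabs s <= b -> cmod (Fp (sqrt (INR n)) (rr n) xi n x s) <= eps.
Proof.
  intros Hn Hb He.
  set (al := sqrt (INR n)). assert (Hal : 1 <= al) by (apply sqrt_n_ge1; auto).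
  pose proof (rr_pos n) as Hr.
  set (B := INR n * rr n). assert (HB : 0 <= B) by (unfold B; apply Rmult_le_pos; [apply pos_INR| lra]).
  set (C0 := al * b ^ 2 / 2 + Rabs xi * b).
  exists (Rmax (2 * (B + 1)) (exp C0 / eps)). split.
  { eapply Rle_trans; [|apply Rmax_l]. lra. }
  intros x s Hx Hs.
  assert (Hx1 : 2 * (B + 1) <= Rabs x) by (eapply Rle_trans; [apply Rmax_l | exact Hx]).
  assert (Hx2 : exp C0 / eps <= Rabs x) by (eapply Rle_trans; [apply Rmax_r | exact Hx]).
  rewrite cmod_Fp. fold al.
  assert (Hsq : sqrt (cosh (rr n * x) ^ 2 - sin (rr n * s) ^ 2) ^ n <= exp (B * Rabs x)).
  { apply Rle_trans with (cosh (rr n * x) ^ n).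
    - apply pow_incr. split. apply sqrt_pos.
      rewrite <- (sqrt_pow2 (cosh (rr n * x))) at 2 by (left; apply cosh_pos).
      apply sqrt_le_1_alt. pose proof (pow2_ge_0 (sin (rr n * s))). lra.
    - apply Rle_trans with (exp (rr n * Rabs x) ^ n).
      + apply pow_incr. split. left; apply cosh_pos.
        replace (rr n * Rabs x) with (Rabs (rr n * x)) by (rewrite Rabs_mult, Rabs_right; lra).
        destruct (Rle_dec 0 (rr n * x)).
        * rewrite Rabs_right by lra. apply cosh_le_exp; lra.
        * rewrite Rabs_left by lra. rewrite <- cosh_even. apply cosh_le_exp; lra.
      + rewrite exp_pow. unfold B. right. f_equal. ring. }
  assert (Hex : - al * (x ^ 2 - s ^ 2) / 2 - xi * s <= C0 - al * x ^ 2 / 2).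
  { unfold C0. assert (s ^ 2 <= b ^ 2).
    { rewrite <- (pow2_abs s). apply pow_incr. split; auto. apply Rabs_pos. }
    assert (- xi * s <= Rabs xi * b).
    { apply Rle_trans with (Rabs (- xi * s)). apply Rle_abs. rewrite Rabs_mult, Rabs_Ropp.
      apply Rmult_le_compat_l; auto. apply Rabs_pos. }
    assert (0 <= al) by lra. nra. }
  apply Rle_trans with (exp (C0 - al * x ^ 2 / 2) * exp (B * Rabs x)).
  { apply Rmult_le_compat. left; apply exp_pos. apply pow_le, sqrt_pos. apply exp_le; auto. auto. }
  rewrite <- exp_plus.
  assert (Hax : Rabs x ^ 2 = x ^ 2) by apply pow2_abs.
  assert (Hx0 : 0 <= Rabs x) by apply Rabs_pos.
  assert (H1 : C0 - al * x ^ 2 / 2 + B * Rabs x <= C0 - Rabs x).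
  { assert (x ^ 2 <= al * x ^ 2) by (pose proof (pow2_ge_0 x); nra). nra. }
  apply Rle_trans with (exp (C0 - Rabs x)). apply exp_le; auto.
  rewrite Rminus_def, exp_plus, exp_Ropp.
  pose proof (exp_ineq1_le (Rabs x)). pose proof (exp_pos (Rabs x)). pose proof (exp_pos C0).
  apply (Rmult_le_reg_r (exp (Rabs x))); auto. rewrite Rmult_assoc, Rinv_l by lra.
  assert (exp C0 <= eps * Rabs x).
  { unfold Rdiv in Hx2. apply (Rmult_le_compat_l eps) in Hx2; [|lra].
    rewrite <- Rmult_assoc, (Rmult_comm eps), Rmult_assoc, Rinv_r, Rmult_1_r in Hx2 by lra. lra. }
  nra.
Qed.

Lemma rr_le1 n : (1 <= n)%nat -> rr n <= 1.
Proof.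
  intros Hn. unfold rr, Rpower. rewrite <- exp_0. apply exp_le.
  assert (0 <= ln (INR n)).
  { rewrite <- ln_1. apply ln_le'. lra. apply (le_INR 1 n) in Hn. simpl in Hn. lra. }
  lra.
Qed.

Lemma choose_n b : 0 <= b -> exists n0 : nat, forall n, (n0 <= n)%nat ->
  (1 <= n)%nat /\ b ^ 2 <= kap * sqrt (INR n) /\ 6 <= Qn n.
Proof.
  intros Hb.
  assert (Hk : 0 < kap) by (unfold kap; rewrite cc_val; lra).
  set (A0 := (36 + b ^ 2) / kap).
  assert (HA0 : 0 <= A0) by (unfold A0; apply Rmult_le_pos; [pose proof (pow2_ge_0 b); lra| left; apply Rinv_0_lt_compat; lra]).
  destruct (nat_large (A0 ^ 2)) as [N HN].
  exists (Nat.max 1 N). intros n Hn.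
  assert (Hn1 : (1 <= n)%nat) by lia.
  assert (HnN : A0 ^ 2 <= INR n) by (eapply Rle_trans; [exact HN| apply le_INR; lia]).
  assert (Hs : A0 <= sqrt (INR n)).
  { rewrite <- (sqrt_pow2 A0) by auto. apply sqrt_le_1_alt. auto. }
  assert (HkA : kap * A0 = 36 + b ^ 2) by (unfold A0; field; lra).
  assert (Hks : 36 + b ^ 2 <= kap * sqrt (INR n)) by (rewrite <- HkA; apply Rmult_le_compat_l; lra).
  split; auto. split. lra.
  unfold Qn. pose proof (rr_pos n). pose proof (rr_le1 n Hn1).
  apply Rle_trans with (kap * sqrt (INR n) / 6).
  - pose proof (pow2_ge_0 b). lra.
  - unfold Rdiv. apply Rmult_le_compat_l. nra. apply Rinv_le_contravar; lra.
Qed.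

Theorem proposition4p3 :
  forall Iinf : R,
  improper_integral_R (fun x => exp (- x ^ 4 / 12)) Iinf ->
  forall b eta : R, 0 <= b -> 0 < eta ->
  exists n0 : nat, forall n : nat, (n0 <= n)%nat ->
  forall xi re im : R,
  improper_integral_R (fun x => psi n x * cos (xi * x)) re ->
  improper_integral_R (fun x => psi n x * sin (xi * x)) im ->
  sqrt (re ^ 2 + im ^ 2) <= (1 + eta) * K Iinf b * exp (- b * Rabs xi).
Proof.
  intros Iinf HI b eta Hb Heta.
  change (improper_integral_R kfun Iinf) in HI.
  destruct (choose_n b Hb) as [n0 Hn0]. exists n0.
  intros n Hn xi re im Hre Him.
  destruct (Hn0 n Hn) as [Hn1 [HbK HQ]].
  assert (HK0 : 0 <= K Iinf b).
  { unfold K. pose proof (I_nonneg Iinf HI). pose proof (exp_pos (13 * b ^ 4 / 12)).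
    assert (0 <= sqrt 3 * b) by (apply Rmult_le_pos; [apply sqrt_pos|lra]).
    apply Rmult_le_pos; lra. }
  assert (Hmain : sqrt (re ^ 2 + im ^ 2) <= K Iinf b * exp (- b * Rabs xi)).
  2: { pose proof (exp_pos (- b * Rabs xi)).
       assert (0 <= K Iinf b * exp (- b * Rabs xi)) by (apply Rmult_le_pos; lra).
       rewrite Rmult_assoc. nra. }
  set (t := if Rle_dec 0 xi then b else - b).
  assert (Ht2 : t ^ 2 = b ^ 2) by (unfold t; destruct (Rle_dec 0 xi); ring).
  assert (Hxt : - xi * t = - b * Rabs xi).
  { unfold t; destruct (Rle_dec 0 xi). rewrite Rabs_right by lra; ring. rewrite Rabs_left by lra; ring. }
  assert (Htb : Rabs t <= b) by (unfold t; destruct (Rle_dec 0 xi); [rewrite Rabs_right|rewrite Rabs_left1]; lra).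
  set (al := sqrt (INR n)). set (F := Fp al (rr n) xi n).
  assert (HF : Hol F) by apply Hol_Fp.
  apply Rle_plus_epsilon. intros eps Heps.
  destruct (vert n xi b (eps / (8 * (b + 1))) Hn1 Hb) as [X [HX0 HX]].
  { apply Rdiv_lt_0_compat; lra. }
  fold al F in HX.
  destruct Hre as [Hre1 Hre2]. destruct Him as [Him1 Him2].
  destruct (Hre2 (eps / 4) ltac:(lra)) as [M1 HM1].
  destruct (Him2 (eps / 4) ltac:(lra)) as [M2 HM2].
  set (c := Rmax (Rmax M1 M2) X + 1). set (a := - c).
  assert (Hc1 : M1 <= c) by (unfold c; pose proof (Rmax_l M1 M2); pose proof (Rmax_l (Rmax M1 M2) X); lra).
  assert (Hc2 : M2 <= c) by (unfold c; pose proof (Rmax_r M1 M2); pose proof (Rmax_l (Rmax M1 M2) X); lra).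
  assert (HcX : X <= c) by (unfold c; pose proof (Rmax_r (Rmax M1 M2) X); lra).
  assert (Hac : a <= c) by (unfold a; lra).
  destruct (Hre1 a c) as [pr1]. destruct (Him1 a c) as [pr2].
  specialize (HM1 a c pr1 ltac:(unfold a; lra) Hc1). specialize (HM2 a c pr2 ltac:(unfold a; lra) Hc2).
  rewrite <- RInt_Reals in HM1, HM2.
  set (IR := RInt (fun x => fst (F x 0)) a c). set (II := RInt (fun x => snd (F x 0)) a c).
  set (JR := RInt (fun x => fst (F x t)) a c). set (JI := RInt (fun x => snd (F x t)) a c).
  assert (EIR : RInt (fun x => psi n x * cos (xi * x)) a c = IR).
  { unfold IR. apply RInt_ext. intros x _. unfold F. rewrite Fp_real. simpl. unfold psi, al. fold (rr n).
    rewrite (Rmult_comm x (rr n)). reflexivity. }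
  assert (EII : RInt (fun x => psi n x * sin (xi * x)) a c = II).
  { unfold II. apply RInt_ext. intros x _. unfold F. rewrite Fp_real. simpl. unfold psi, al. fold (rr n).
    rewrite (Rmult_comm x (rr n)). reflexivity. }
  rewrite EIR in HM1. rewrite EII in HM2.
  destruct (contour F HF a c t) as [[th1 [Hth1 E1]] [th2 [Hth2 E2]]].
  fold JR IR in E1. fold JI II in E2.
  assert (Hthb : forall th, Rmin 0 t <= th <= Rmax 0 t -> Rabs th <= b).
  { intros th [h1 h2]. unfold t in *. destruct (Rle_dec 0 xi).
    - rewrite Rmin_left in h1 by lra. rewrite Rmax_right in h2 by lra. rewrite Rabs_right; lra.
    - rewrite Rmin_right in h1 by lra. rewrite Rmax_left in h2 by lra. rewrite Rabs_left1; lra. }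
  assert (Habs_a : X <= Rabs a) by (unfold a; rewrite Rabs_Ropp, Rabs_right; lra).
  assert (Habs_c : X <= Rabs c) by (rewrite Rabs_right; lra).
  assert (Herr : forall u v : R, Rabs u <= eps / (8 * (b + 1)) -> Rabs v <= eps / (8 * (b + 1)) ->
            Rabs ((u - v) * t) <= eps / 4).
  { intros u v Hu Hv. rewrite Rabs_mult.
    assert (Rabs (u - v) <= 2 * (eps / (8 * (b + 1)))).
    { unfold Rminus. eapply Rle_trans. apply Rabs_triang. rewrite Rabs_Ropp. lra. }
    apply Rle_trans with (2 * (eps / (8 * (b + 1))) * b).
    apply Rmult_le_compat; auto; apply Rabs_pos.
    replace (2 * (eps / (8 * (b + 1))) * b) with (eps / 4 * (b / (b + 1))) by (field; lra).
    assert (b / (b + 1) <= 1). { apply (Rmult_le_reg_r (b + 1)). lra. unfold Rdiv. rewrite Rmult_assoc, Rinv_l; lra. }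
    assert (0 <= b / (b + 1)) by (apply Rmult_le_pos; [lra| left; apply Rinv_0_lt_compat; lra]).
    nra. }
  assert (HR : Rabs (JR - IR) <= eps / 4).
  { rewrite E1. replace (- (snd (F c th1) - snd (F a th1)) * t) with ((snd (F a th1) - snd (F c th1)) * t) by ring.
    apply Herr.
    - eapply Rle_trans. apply snd_le_cmod. apply HX; auto.
    - eapply Rle_trans. apply snd_le_cmod. apply HX; auto. }
  assert (HI2 : Rabs (JI - II) <= eps / 4).
  { rewrite E2. apply Herr.
    - eapply Rle_trans. apply fst_le_cmod. apply HX; auto.
    - eapply Rle_trans. apply fst_le_cmod. apply HX; auto. }
  assert (HJ : sqrt (JR ^ 2 + JI ^ 2) <= K Iinf b * exp (- b * Rabs xi)).
  {
    assert (Hex1 : ex_RInt (fun x => fst (F x t)) a c) by (apply exR; intros x0; exact (proj1 (Hol_exd F HF t x0))).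
    assert (Hex2 : ex_RInt (fun x => snd (F x t)) a c) by (apply exR; intros x0; exact (proj2 (Hol_exd F HF t x0))).
    eapply Rle_trans. exact (cmod_RInt (fun x => fst (F x t)) (fun x => snd (F x t)) a c Hac Hex1 Hex2 (Hol_cmod_ex F HF t a c)).
    apply Rle_trans with (RInt (fun x => exp (- xi * t) * (gfun b x + Tfun b (Qn n) x)) a c).
    - apply RInt_le'; auto. apply (Hol_cmod_ex F HF t a c).
      apply exR. intros; unfold gfun, Tfun; auto_derive. nra.
      intros x _. apply point_bound; auto.
    - rewrite (RInt_scal (V:=R_CompleteNormedModule) (fun x => gfun b x + Tfun b (Qn n) x)).
      2: { apply exR. intros; unfold gfun, Tfun; auto_derive. nra. }
      change (scal ?A ?B) with (A * B). rewrite Hxt, Rmult_comm.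
      apply Rmult_le_compat_r. left; apply exp_pos.
      apply major_int; auto. }
  pose proof (norm_tri re im JR JI).
  assert (Rabs (re - JR) <= eps / 2).
  { replace (re - JR) with ((re - IR) + - (JR - IR)) by ring. eapply Rle_trans. apply Rabs_triang.
    rewrite Rabs_Ropp. rewrite Rabs_minus_sym in HM1. lra. }
  assert (Rabs (im - JI) <= eps / 2).
  { replace (im - JI) with ((im - II) + - (JI - II)) by ring. eapply Rle_trans. apply Rabs_triang.
    rewrite Rabs_Ropp. rewrite Rabs_minus_sym in HM2. lra. }
  lra.
Qed.
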